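(* Let $\beta>0$, $0<\alpha<1$, and define $T\colon\mathbb R\to\mathbb R$ by $Tx=x-\beta$ if $x\le\beta$ and $Tx=\alpha(x-\beta)$ if $x>\beta$. Set $q(x):=\left\lceil\log_\alpha\frac{\beta}{\alpha\beta+(1-\alpha)x}\right\rceil$ for $x>\beta$. Then $\operatorname{Fix}T=\varnothing$, $v:=P_{\overline{\operatorname{ran}}(\mathrm{Id}-T)}0=\beta$, and for all $n\in\mathbb N$ and $x\in\mathbb R$: $(T_{-v})^nx=\alpha^n\max\{x,0\}+\min\{x,0\}$; $(v+T)^nx=\alpha^n\max\{x-\beta,0\}+\min\{x,\beta\}$; $T^nx+nv=x$ if $x\le\beta$; $=\alpha^nx-\frac{\alpha(1-\alpha^n)}{1-\alpha}\beta+n\beta$ if $x>\beta$ and $n<q(x)$; $=\alpha^{q(x)}x-\frac{\alpha(1-\alpha^{q(x)})}{1-\alpha}\beta+q(x)\beta$ if $x>\beta$ and $n\ge q(x)$. Consequently $\lim_n(T_{-v})^nx=\min\{x,0\}$, $\lim_n(v+T)^nx=\min\{x,\beta\}$, and $\lim_n(T^nx+nv)$ equals $x$ if $x\le\beta$ and $\alpha^{q(x)}x-\frac{\alpha(1-\alpha^{q(x)})}{1-\alpha}\beta+q(x)\beta$ if $x>\beta$. Moreover, there is no map $S\colon\mathbb R\to\mathbb R$ such that $S^nx=T^nx+nv$ for all $x\in\mathbb R$ and all $n\in\mathbb N$.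
   Context: $T_{-v}x:=T(x+v)$, $(v+T)x:=v+Tx$, $\operatorname{Fix}$ denotes the fixed point set, and $\overline{\operatorname{ran}}(\mathrm{Id}-T)$ is the closure of the range of $\mathrm{Id}-T$. *)

(* Defs.v *)
From Stdlib Require Import Reals Lra ZArith.
Open Scope R_scope.

Definition Tab (alpha beta : R) (x : R) : R :=
  if Rle_dec x beta then x - beta else alpha * (x - beta).

Definition iterR (n : nat) (f : R -> R) (x : R) : R := Nat.iter n f x.

(* T_{-v} x := T (x + v),  (v + T) x := v + T x *)
Definition shift_arg (v : R) (T : R -> R) : R -> R := fun x => T (x + v).
Definition shift_val (v : R) (T : R -> R) : R -> R := fun x => v + T x.

Definition Fix (T : R -> R) (x : R) : Prop := T x = x.

Definition ran_IdmT (T : R -> R) (y : R) : Prop := exists x, y = x - T x.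

Definition closure (A : R -> Prop) (y : R) : Prop :=
  forall eps, 0 < eps -> exists a, A a /\ Rabs (y - a) < eps.

Definition is_proj (C : R -> Prop) (z p : R) : Prop :=
  C p /\ forall c, C c -> Rabs (z - p) <= Rabs (z - c).

Definition Rceil (x : R) : Z := (1 - up (- x))%Z.
Definition log_base (a y : R) : R := ln y / ln a.

Definition qfun (alpha beta x : R) : Z :=
  Rceil (log_base alpha (beta / (alpha * beta + (1 - alpha) * x))).

(* Main.v *)
Require Import Defs.
From Stdlib Require Import Reals Lra ZArith Lia.
Open Scope R_scope.

Lemma iter_S (n : nat) f x : iterR (S n) f x = f (iterR n f x).
Proof. reflexivity. Qed.

Lemma iter_add a b f x : iterR (a + b) f x = iterR a f (iterR b f x).
Proof. induction a; simpl; [reflexivity| unfold iterR in *; simpl; now rewrite IHa]. Qed.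

Lemma cv_alpha a : 0 < a -> a < 1 -> Un_cv (fun n => a ^ n) 0.
Proof.
  intros h0 h1 eps he. destruct (pow_lt_1_zero a ltac:(rewrite Rabs_right; lra) eps he) as [N HN].
  exists N; intros n hn. unfold R_dist. rewrite Rminus_0_r. now apply HN.
Qed.

Lemma cv_geo a c d : 0 < a -> a < 1 -> Un_cv (fun n => a ^ n * c + d) d.
Proof.
  intros h0 h1.
  assert (H : Un_cv (fun n => a ^ n * c + d) (0 * c + d)); [|now rewrite Rmult_0_l, Rplus_0_l in H].
  apply CV_plus; [apply CV_mult; [now apply cv_alpha|] |];
  intros eps he; exists O; intros; unfold R_dist; rewrite Rminus_diag, Rabs_R0; lra.
Qed.

Lemma cv_event (u : nat -> R) l N : (forall n, (N <= n)%nat -> u n = l) -> Un_cv u l.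
Proof.
  intros H eps he; exists N; intros n hn; unfold R_dist; rewrite H by lia.
  rewrite Rminus_diag, Rabs_R0; lra.
Qed.

Section S.
Variables alpha beta : R.
Hypothesis Hb : 0 < beta.
Hypothesis Ha0 : 0 < alpha.
Hypothesis Ha1 : alpha < 1.
Let T := Tab alpha beta.

Lemma T_le y : y <= beta -> T y = y - beta.
Proof. intros; unfold T, Tab; destruct Rle_dec; lra. Qed.
Lemma T_gt y : beta < y -> T y = alpha * (y - beta).
Proof. intros; unfold T, Tab; destruct Rle_dec; lra. Qed.

Lemma sa_neg n x : x <= 0 -> iterR n (shift_arg beta T) x = x.
Proof. intros h; induction n; [reflexivity|]. rewrite iter_S, IHn; unfold shift_arg; rewrite T_le; lra. Qed.
Lemma sa_pos n x : 0 < x -> iterR n (shift_arg beta T) x = alpha ^ n * x.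
Proof. intros h; induction n; [simpl; ring|]. rewrite iter_S, IHn; unfold shift_arg.
  assert (0 < alpha ^ n) by (apply pow_lt; lra).
  rewrite T_gt; [simpl; ring| nra]. Qed.
Lemma sv_le n x : x <= beta -> iterR n (shift_val beta T) x = x.
Proof. intros h; induction n; [reflexivity|]. rewrite iter_S, IHn; unfold shift_val; rewrite T_le; lra. Qed.
Lemma sv_gt n x : beta < x -> iterR n (shift_val beta T) x = beta + alpha ^ n * (x - beta).
Proof. intros h; induction n; [simpl; ring|]. rewrite iter_S, IHn; unfold shift_val.
  assert (0 < alpha ^ n) by (apply pow_lt; lra).
  rewrite T_gt; [simpl; ring| nra]. Qed.

Lemma T_lin n y : y <= beta -> iterR n T y = y - INR n * beta.
Proof. intros h; induction n; [simpl; ring|]. rewrite iter_S, IHn, S_INR, T_le; [ring|].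
  assert (0 <= INR n) by apply pos_INR. nra. Qed.

Let D x := alpha * beta + (1 - alpha) * x.

Lemma T_geo n x : (forall k, (k < n)%nat -> alpha ^ k * D x > beta) ->
  iterR n T x = alpha ^ n * x - alpha * (1 - alpha ^ n) / (1 - alpha) * beta.
Proof.
  induction n; intros H. simpl; field; lra.
  rewrite iter_S, IHn by (intros; apply H; lia).
  specialize (H n ltac:(lia)). unfold D in H.
  rewrite T_gt.
  - simpl; field; lra.
  - apply Rmult_lt_reg_l with (1 - alpha); [lra|].
    replace ((1 - alpha) * (alpha ^ n * x - alpha * (1 - alpha ^ n) / (1 - alpha) * beta))
      with (alpha ^ n * (alpha * beta + (1 - alpha) * x) - alpha * beta) by (field; lra).
    lra.
Qed.

Lemma T_geo_le n x : alpha ^ n * D x <= beta ->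
  alpha ^ n * x - alpha * (1 - alpha ^ n) / (1 - alpha) * beta <= beta.
Proof.
  intros H; unfold D in H.
  apply Rmult_le_reg_l with (1 - alpha); [lra|].
  replace ((1 - alpha) * (alpha ^ n * x - alpha * (1 - alpha ^ n) / (1 - alpha) * beta))
      with (alpha ^ n * (alpha * beta + (1 - alpha) * x) - alpha * beta) by (field; lra).
  lra.
Qed.

Lemma q_spec x k : beta < x -> ((Z.of_nat k < qfun alpha beta x)%Z <-> alpha ^ k * D x > beta).
Proof.
  intros hx. unfold qfun, Rceil, log_base, D.
  set (r := beta / (alpha * beta + (1 - alpha) * x)).
  assert (hD : alpha * beta + (1 - alpha) * x > beta) by nra.
  assert (hr0 : 0 < r) by (unfold r; apply Rdiv_lt_0_compat; lra).
  assert (hla : ln alpha < 0) by (rewrite <- ln_1; apply ln_increasing; lra).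
  set (L := ln r / ln alpha).
  destruct (archimed (- L)) as [h1 h2].
  assert (hpk : 0 < alpha ^ k) by (apply pow_lt; lra).
  assert (E : alpha ^ k * (alpha * beta + (1 - alpha) * x) > beta <-> r < alpha ^ k).
  { unfold r; split; intros h.
    - apply Rmult_lt_reg_r with (alpha * beta + (1 - alpha) * x); [lra|].
      unfold Rdiv; rewrite Rmult_assoc, Rinv_l; lra.
    - apply Rmult_lt_compat_r with (r := alpha * beta + (1 - alpha) * x) in h; [|lra].
      unfold Rdiv in h; rewrite Rmult_assoc, Rinv_l in h; lra. }
  rewrite E.
  assert (E2 : r < alpha ^ k <-> INR k < L).
  { unfold L; split; intros h.
    - apply ln_increasing in h; [|lra]. rewrite ln_pow in h by lra.
      apply Rmult_lt_reg_r with (- ln alpha); [lra|].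
      unfold Rdiv; replace (ln r * / ln alpha * - ln alpha) with (- ln r) by (field; lra). lra.
    - apply ln_lt_inv; [lra|lra|]. rewrite ln_pow by lra.
      apply Rmult_lt_compat_r with (r := - ln alpha) in h; [|lra].
      unfold Rdiv in h; replace (ln r * / ln alpha * - ln alpha) with (- ln r) in h by (field; lra). lra. }
  rewrite E2. rewrite INR_IZR_INZ.
  split; intros h.
  - assert (Z.of_nat k <= 1 - up (- L) - 1)%Z by lia.
    apply IZR_le in H. rewrite !minus_IZR in H. lra.
  - apply lt_IZR. rewrite minus_IZR. lra.
Qed.

End S.

Lemma q_pos alpha beta x : 0 < beta -> 0 < alpha -> alpha < 1 -> beta < x -> (0 < qfun alpha beta x)%Z.
Proof. intros. apply (q_spec alpha beta H H0 H1 x O H2). simpl. nra. Qed.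

Lemma T_after alpha beta x n : 0 < beta -> 0 < alpha -> alpha < 1 -> beta < x ->
  (qfun alpha beta x <= Z.of_nat n)%Z ->
  iterR n (Tab alpha beta) x + INR n * beta =
  powerRZ alpha (qfun alpha beta x) * x - alpha * (1 - powerRZ alpha (qfun alpha beta x)) / (1 - alpha) * beta
  + IZR (qfun alpha beta x) * beta.
Proof.
  intros Hb Ha0 Ha1 hx hn.
  pose proof (q_pos alpha beta x Hb Ha0 Ha1 hx) as hq.
  set (q := qfun alpha beta x) in *.
  set (m := Z.to_nat q).
  assert (hm : Z.of_nat m = q) by (unfold m; apply Z2Nat.id; lia).
  rewrite <- hm, <- pow_powerRZ, <- INR_IZR_INZ.
  assert (hmn : (m <= n)%nat) by lia.
  replace n with ((n - m) + m)%nat by lia.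
  rewrite iter_add.
  assert (Hg : iterR m (Tab alpha beta) x = alpha ^ m * x - alpha * (1 - alpha ^ m) / (1 - alpha) * beta).
  { apply T_geo; auto. intros k hk. apply (q_spec alpha beta Hb Ha0 Ha1 x k hx). fold q. lia. }
  rewrite Hg, T_lin; auto.
  - rewrite plus_INR, minus_INR by lia. ring.
  - apply T_geo_le; auto.
    destruct (Rle_lt_dec (alpha ^ m * (alpha * beta + (1 - alpha) * x)) beta) as [h|h]; auto.
    apply (q_spec alpha beta Hb Ha0 Ha1 x m hx) in h. fold q in h. lia.
Qed.

Theorem mainTheorem7 (alpha beta : R) (Hb : 0 < beta) (Ha0 : 0 < alpha) (Ha1 : alpha < 1) :
  let T := Tab alpha beta in
  let q := qfun alpha beta in
  (* Fix T = empty *)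
  (forall x, ~ Fix T x) /\
  (* v := P_{closure ran(Id - T)} 0 = beta *)
  (forall p, is_proj (closure (ran_IdmT T)) 0 p <-> p = beta) /\
  (* explicit iterates, with v = beta *)
  (forall (n : nat) (x : R),
      iterR n (shift_arg beta T) x = alpha ^ n * Rmax x 0 + Rmin x 0) /\
  (forall (n : nat) (x : R),
      iterR n (shift_val beta T) x = alpha ^ n * Rmax (x - beta) 0 + Rmin x beta) /\
  (forall (n : nat) (x : R),
      (x <= beta -> iterR n T x + INR n * beta = x) /\
      (beta < x -> (Z.of_nat n < q x)%Z ->
         iterR n T x + INR n * beta =
           alpha ^ n * x - alpha * (1 - alpha ^ n) / (1 - alpha) * beta + INR n * beta) /\
      (beta < x -> (q x <= Z.of_nat n)%Z ->
         iterR n T x + INR n * beta =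
           powerRZ alpha (q x) * x - alpha * (1 - powerRZ alpha (q x)) / (1 - alpha) * beta
           + IZR (q x) * beta)) /\
  (* limits *)
  (forall x, Un_cv (fun n => iterR n (shift_arg beta T) x) (Rmin x 0)) /\
  (forall x, Un_cv (fun n => iterR n (shift_val beta T) x) (Rmin x beta)) /\
  (forall x, x <= beta -> Un_cv (fun n => iterR n T x + INR n * beta) x) /\
  (forall x, beta < x ->
     Un_cv (fun n => iterR n T x + INR n * beta)
       (powerRZ alpha (q x) * x - alpha * (1 - powerRZ alpha (q x)) / (1 - alpha) * beta
        + IZR (q x) * beta)) /\
  (* no S with S^n = T^n + n v *)
  ~ (exists S : R -> R, forall (x : R) (n : nat),
        iterR n S x = iterR n T x + INR n * beta).
Proof.
  intros T q.
  assert (SA : forall (n : nat) (x : R),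
      iterR n (shift_arg beta T) x = alpha ^ n * Rmax x 0 + Rmin x 0).
  { intros n x. destruct (Rle_lt_dec x 0) as [h|h].
    - unfold T; rewrite sa_neg by auto. rewrite Rmax_right, Rmin_left by lra. ring.
    - unfold T; rewrite sa_pos by auto. rewrite Rmax_left, Rmin_right by lra. ring. }
  assert (SV : forall (n : nat) (x : R),
      iterR n (shift_val beta T) x = alpha ^ n * Rmax (x - beta) 0 + Rmin x beta).
  { intros n x. destruct (Rle_lt_dec x beta) as [h|h].
    - unfold T; rewrite sv_le by auto. rewrite Rmax_right, Rmin_left by lra. ring.
    - unfold T; rewrite sv_gt by auto. rewrite Rmax_left, Rmin_right by lra. ring. }
  assert (TL : forall n x, x <= beta -> iterR n T x + INR n * beta = x).
  { intros n x h. unfold T; rewrite T_lin by auto. ring. }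
  assert (TA : forall n x, beta < x -> (q x <= Z.of_nat n)%Z ->
         iterR n T x + INR n * beta =
           powerRZ alpha (q x) * x - alpha * (1 - powerRZ alpha (q x)) / (1 - alpha) * beta
           + IZR (q x) * beta).
  { intros n x h1 h2. unfold T, q; apply T_after; auto. }
  assert (ranC : forall c, closure (ran_IdmT T) c <-> beta <= c).
  { intros c; split.
    - intros H. destruct (Rle_lt_dec beta c) as [h|h]; auto.
      destruct (H (beta - c) ltac:(lra)) as [a [[y ->] Ha]].
      exfalso. unfold T, Tab in Ha. destruct Rle_dec.
      + rewrite Rabs_left in Ha; lra.
      + rewrite Rabs_left in Ha; nra.
    - intros h eps he. exists c; split.
      + destruct (Rle_lt_dec c beta) as [h'|h'].
        * exists 0. unfold T; rewrite T_le by lra. lra.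
        * exists ((c - alpha * beta) / (1 - alpha)).
          assert (hh : beta < (c - alpha * beta) / (1 - alpha)).
          { apply Rmult_lt_reg_r with (1 - alpha); [lra|].
            unfold Rdiv; rewrite Rmult_assoc, Rinv_l; lra. }
          unfold T; rewrite T_gt by lra. field; lra.
      + rewrite Rminus_diag, Rabs_R0; lra. }
  split; [|split; [|split; [exact SA|split; [exact SV|split]]]].
  - intros x hx. unfold Fix, T, Tab in hx. destruct Rle_dec; nra.
  - intros p; unfold is_proj; split.
    + intros [h1 h2]. apply ranC in h1. specialize (h2 beta ltac:(apply ranC; lra)).
      rewrite !Rminus_0_l, !Rabs_Ropp, !Rabs_right in h2; lra.
    + intros ->; split; [apply ranC; lra|]. intros c hc. apply ranC in hc.
      rewrite !Rminus_0_l, !Rabs_Ropp, !Rabs_right; lra.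
  - intros n x; split; [|split]; [now apply TL| |now apply TA].
    intros hx hn. f_equal. unfold T; apply T_geo; auto.
    intros k hk. apply (q_spec alpha beta Hb Ha0 Ha1 x k hx). fold (q x). lia.
  - split; [|split; [|split; [|split]]].
    + intros x. eapply Un_cv_ext; [intros n; symmetry; apply SA|]. now apply cv_geo.
    + intros x. eapply Un_cv_ext; [intros n; symmetry; apply SV|]. now apply cv_geo.
    + intros x hx. apply cv_event with O. intros; now apply TL.
    + intros x hx. apply cv_event with (Z.to_nat (q x)). intros n hn. apply TA; auto.
      pose proof (q_pos alpha beta x Hb Ha0 Ha1 hx). fold (q x) in H. lia.
    + intros [S HS].
      assert (S1 : forall y, S y = T y + beta).
      { intros y. specialize (HS y 1%nat). simpl in HS. unfold iterR in HS; simpl in HS. lra. }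
      specialize (HS (2 * beta) 2%nat). change (iterR 2 S (2*beta)) with (S (S (2*beta))) in HS.
      change (iterR 2 T (2*beta)) with (T (T (2*beta))) in HS.
      rewrite S1, S1 in HS. unfold T in HS.
      rewrite (T_gt alpha beta (2 * beta)) in HS by lra.
      rewrite (T_le alpha beta (alpha * (2 * beta - beta))) in HS by nra.
      rewrite (T_gt alpha beta (alpha * (2 * beta - beta) + beta)) in HS by nra.
      simpl in HS. assert (alpha * alpha * beta = alpha * beta) by lra.
      assert (alpha * (alpha - 1) * beta = 0) by lra. assert (0 < alpha * (1 - alpha) * beta) by (apply Rmult_lt_0_compat; [apply Rmult_lt_0_compat|]; lra). lra.
Qed.
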